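(* Assume (A1) differentiability, (A2) convexity, (A3) $\mu$-strong convexity of $f$, (A4) interpolation and (SS) Star Similarity with constant $\delta_*>0$ (with respect to the point $x_*$, which is the minimizer of $f$ and satisfies (A4)). If the stepsize satisfies $0<\gamma\le\frac{\mu}{2\delta_*^2}$, then the iterates of SPPM satisfy, for every $k\ge0$, $$\mathbb{E}\big[\|x_k-x_*\|^2\big]\le\left(1-\min\Big(\frac{\gamma\mu}{4},\frac12\Big)\right)^k\|x_0-x_*\|^2 .$$
   Context: Setting: $\mathcal{D}$ is a probability distribution over samples $\xi$; for each $\xi$, $f_\xi:\mathbb{R}^d\to\mathbb{R}$; $f(x)=\mathbb{E}_{\xi\sim\mathcal{D}}[f_\xi(x)]$, with $\nabla f(x)=\mathbb{E}[\nabla f_\xi(x)]$. Assumptions: (A1) $f_\xi$ differentiable for $\mathcal{D}$-a.e. $\xi$; (A2) $f_\xi$ convex for $\mathcal{D}$-a.e. $\xi$; (A3) $f(x)\ge f(y)+\langle\nabla f(y),x-y\rangle+\frac\mu2\|x-y\|^2$ for all $x,y$; (A4) (interpolation) there exists $x_*$ with $\nabla f_\xi(x_* )=0$ for $\mathcal{D}$-a.e. $\xi$; (SS) (Star Similarity) there exist a minimizer $x_*$ of $f$ and $\delta_*>0$ with $\mathbb{E}_{\xi\sim\mathcal{D}}\big[\|\nabla f_\xi(x)-\nabla f(x)-\nabla f_\xi(x_* )\|^2\big]\le\delta_*^2\|x-x_*\|^2$ for all $x\in\mathbb{R}^d$. SPPM: given $\gamma>0$, $x_0\in\mathbb{R}^d$,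 and i.i.d. $\xi_0,\xi_1,\dots\sim\mathcal{D}$, set $x_{k+1}=\arg\min_{z}\{f_{\xi_k}(z)+\frac{1}{2\gamma}\|z-x_k\|^2\}$. *)

(* Defs.v *)
From HB Require Import structures.
From mathcomp Require Import all_boot all_order all_algebra.
From mathcomp Require Import all_classical all_reals all_analysis.
Set Implicit Arguments. Unset Strict Implicit. Unset Printing Implicit Defensive.
Import Order.TTheory GRing.Theory Num.Theory.
Import numFieldNormedType.Exports.
Local Open Scope ring_scope.

Definition dotv (R : realType) (d : nat) (x y : 'rV[R]_d) : R :=
  \sum_(i < d) x ord0 i * y ord0 i.

Definition sqn (R : realType) (d : nat) (x : 'rV[R]_d) : R := dotv x x.

Definition is_gradient (R : realType) (d : nat) (h : 'rV[R]_d -> R^o)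
  (gr : 'rV[R]_d) (x : 'rV[R]_d) : Prop :=
  differentiable h x /\ forall v, 'd h x v = dotv gr v.

Definition convex_fun (R : realType) (d : nat) (h : 'rV[R]_d -> R) : Prop :=
  forall (x y : 'rV[R]_d) (t : R), 0 <= t -> t <= 1 ->
    h (t *: x + (1 - t) *: y) <= t * h x + (1 - t) * h y.

(* SPPM iterate after processing the samples s = [:: xi_0; ...; xi_(k-1)]:
   x_(j+1) = prox xi_j x_j, starting from x0. *)
Definition sppm (T : Type) (V : Type) (prox : T -> V -> V) (x0 : V)
  (s : seq T) : V := foldl (fun x xi => prox xi x) x0 s.

(* Expectation with respect to n i.i.d. samples xi_0, ..., xi_(n-1) ~ D of a
   (nonnegative) function of the sample list [:: xi_0; ...; xi_(n-1)],
   computed as the iterated integral (product measure D^n). *)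
Fixpoint iid_expect (dT : measure_display) (T : measurableType dT)
  (R : realType) (D : probability T R) (n : nat)
  (Phi : seq T -> \bar R) {struct n} : \bar R :=
  match n with
  | 0 => Phi [::]
  | n'.+1 => (\int[D]_xi iid_expect D n' (fun s => Phi (xi :: s)))%E
  end.

(* Main.v *)
Require Import Defs.
From HB Require Import structures.
From mathcomp Require Import all_boot all_order all_algebra.
From mathcomp Require Import all_classical all_reals all_analysis.
From mathcomp Require Import ring lra.
From mathcomp Require Import measurable_realfun.
Set Implicit Arguments. Unset Strict Implicit. Unset Printing Implicit Defensive.
Import Order.TTheory GRing.Theory Num.Theory.
Import numFieldNormedType.Exports.
Local Open Scope classical_set_scope.
Local Open Scope ring_scope.
Section Alg.
Variables (R : realType) (d : nat).
Implicit Types (x y z : 'rV[R]_d).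

Lemma dotvC x y : dotv x y = dotv y x.
Proof. by rewrite /dotv; apply: eq_bigr => i _; rewrite mulrC. Qed.
Lemma dotvDl x y z : dotv (x + y) z = dotv x z + dotv y z.
Proof. by rewrite /dotv -big_split; apply: eq_bigr => i _; rewrite mxE mulrDl. Qed.
Lemma dotvNl x y : dotv (- x) y = - dotv x y.
Proof. by rewrite /dotv -sumrN; apply: eq_bigr => i _; rewrite mxE mulNr. Qed.
Lemma dotvZl (t : R) x y : dotv (t *: x) y = t * dotv x y.
Proof. by rewrite /dotv mulr_sumr; apply: eq_bigr => i _; rewrite mxE mulrA. Qed.
Lemma dotvBl x y z : dotv (x - y) z = dotv x z - dotv y z.
Proof. by rewrite dotvDl dotvNl. Qed.
Lemma dotvDr x y z : dotv x (y + z) = dotv x y + dotv x z.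
Proof. by rewrite dotvC dotvDl !(dotvC x). Qed.
Lemma dotvNr x y : dotv x (- y) = - dotv x y.
Proof. by rewrite dotvC dotvNl dotvC. Qed.
Lemma dotvBr x y z : dotv x (y - z) = dotv x y - dotv x z.
Proof. by rewrite dotvDr dotvNr. Qed.
Lemma dotvZr (t : R) x y : dotv x (t *: y) = t * dotv x y.
Proof. by rewrite dotvC dotvZl dotvC. Qed.
Lemma dotv0l x : dotv 0 x = 0.
Proof. by rewrite /dotv big1 // => i _; rewrite mxE mul0r. Qed.
Lemma dotv0r x : dotv x 0 = 0.
Proof. by rewrite dotvC dotv0l. Qed.
Lemma sqn_ge0 x : 0 <= sqn x.
Proof. by rewrite /sqn /dotv sumr_ge0 // => i _; rewrite -expr2 sqr_ge0. Qed.
Lemma sqn_eq0 x : sqn x = 0 -> x = 0.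
Proof.
move=> /eqP; rewrite /sqn /dotv psumr_eq0; last by move=> i _; rewrite -expr2 sqr_ge0.
move=> /allP H; apply/rowP => i; rewrite mxE.
by have /(_ (mem_index_enum i))/implyP/(_ isT) := H i; rewrite mulf_eq0 orbb => /eqP.
Qed.
Lemma sqnD x y : sqn (x + y) = sqn x + 2 * dotv x y + sqn y.
Proof. rewrite /sqn dotvDl !dotvDr (dotvC y x); ring. Qed.
Lemma sqnB x y : sqn (x - y) = sqn x - 2 * dotv x y + sqn y.
Proof. rewrite /sqn dotvBl !dotvBr (dotvC y x); ring. Qed.
Lemma sqnZ (t : R) x : sqn (t *: x) = t ^+ 2 * sqn x.
Proof. rewrite /sqn dotvZl dotvZr; ring. Qed.
Lemma sqnN x : sqn (- x) = sqn x.
Proof. by rewrite /sqn dotvNl dotvNr opprK. Qed.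
End Alg.

Lemma lim_right_ge (R : realType) (q : R -> R) (L c : R) :
  q x @[x --> (0:R)^'] --> L -> (forall t, 0 < t <= 1 -> c <= q t) -> c <= L.
Proof.
move=> cq H; rewrite leNgt; apply/negP => Lc.
have e0 : 0 < c - L by rewrite subr_gt0.
move/cvgrPdist_lt : cq => /(_ _ e0).
rewrite /within => /nbhs_ballP [e /= e0' He].
pose t := Num.min (e / 2) 1.
have t0 : 0 < t by rewrite lt_min ltr01 andbT divr_gt0.
have t1 : t <= 1 by rewrite ge_min lexx orbT.
have : ball 0 e t.
  rewrite /ball /= sub0r normrN gtr0_norm //.
  have : t <= e / 2 by rewrite ge_min lexx.
  lra.
move/He => /(_ (lt0r_neq0 t0)).
have := H t (ltac:(by rewrite t0 t1)).
move=> h1; rewrite ltr_distlC => /andP[_ h2]; lra.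
Qed.

Lemma lim_right_le (R : realType) (q : R -> R) (L c : R) :
  q x @[x --> (0:R)^'] --> L -> (forall t, 0 < t <= 1 -> q t <= c) -> L <= c.
Proof.
move=> cq H; rewrite -lerN2; apply: (@lim_right_ge _ (fun t => - q t)).
  exact: cvgN.
by move=> t /H; rewrite lerN2.
Qed.

Section Grad.
Variables (R : realType) (d : nat).
Implicit Types (x y z p v : 'rV[R]_d).

Lemma grad_quot (h : 'rV[R]_d -> R^o) gr p v : is_gradient h gr p ->
  (fun t => (h (p + t *: v) - h p) / t) @ (0:R)^' --> dotv gr v.
Proof.
move=> [hd hg].
have D := @diff_derivable _ _ _ h p v hd.
have E : 'D_v h p = dotv gr v by rewrite deriveE // hg.
rewrite -E.
have -> : (fun t : R => (h (p + t *: v) - h p) / t) =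
  (fun t => t^-1 *: ((h \o shift p) (t *: v) - h p)).
  by rewrite funeqE => t /=; rewrite (addrC (t *: v)) mulrC.
exact: D.
Qed.


Lemma convex_grad (h : 'rV[R]_d -> R^o) gr p y : convex_fun h -> is_gradient h gr p ->
  h p + dotv gr (y - p) <= h y.
Proof.
move=> hc hg.
have L := @grad_quot h gr p (y - p) hg.
suff : dotv gr (y - p) <= h y - h p by lra.
apply: (@lim_right_le _ (fun t : R => (h (p + t *: (y - p)) - h p) / t)); first exact: L.
move=> t /andP[t0 t1].
rewrite ler_pdivrMr //.
have := hc y p t (ltW t0) t1.
have -> : t *: y + (1 - t) *: p = p + t *: (y - p).
  by rewrite scalerBl scale1r scalerBr addrCA.
move=> H; nra.
Qed.
End Grad.

Lemma small_t (R : realType) (A B : R) :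
  (forall t, 0 < t <= 1 -> 0 <= A + t * B) -> 0 <= A.
Proof.
move=> H; rewrite leNgt; apply/negP => A0.
case: (lerP B 0) => B0.
  have := H 1 (ltac:(by rewrite ltr01 lexx)); lra.
pose t := Num.min 1 (- A / (2 * B)).
have t0 : 0 < t.
  rewrite lt_min ltr01 /=; apply: divr_gt0; lra.
have t1 : t <= 1 by rewrite ge_min lexx.
have t2 : t <= - A / (2 * B) by rewrite ge_min lexx orbT.
have := H t (ltac:(by rewrite t0 t1)).
have : t * B <= - A / 2.
  rewrite -ler_pdivlMr //; apply: le_trans t2 _.
  by rewrite invfM mulrA -[X in X <= _]mulrA mulrC [X in X <= _]mulrC mulrA.
lra.
Qed.

Section Three.
Variables (R : realType) (d : nat).
Implicit Types (x y z : 'rV[R]_d).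

Lemma three_point (h : 'rV[R]_d -> R) (gam : R) x y z : 0 < gam -> convex_fun h ->
  (forall w, h y + sqn (y - x) / (2 * gam) <= h w + sqn (w - x) / (2 * gam)) ->
  sqn (z - y) <= sqn (z - x) - sqn (y - x) - 2 * gam * (h y - h z).
Proof.
move=> g0 hc H.
set D := dotv (y - x) (z - y).
have key : 0 <= h z - h y + D / gam.
  apply: (@small_t _ _ (sqn (z - y) / (2 * gam))) => t /andP[t0 t1].
  have := H (t *: z + (1 - t) *: y).
  have -> : t *: z + (1 - t) *: y - x = (y - x) + t *: (z - y).
    by apply/rowP => i; rewrite !mxE; ring.
  rewrite (sqnD (y - x)) dotvZr sqnZ -/D.
  have := hc z y t (ltW t0) t1.
  move=> Hc Hm.
  have : 0 <= t * (h z - h y + D / gam + t * (sqn (z - y) / (2 * gam))).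
    have g2 : 0 < 2 * gam by lra.
    set S1 := sqn (y - x) in Hm *; set S2 := sqn (z - y) in Hm *.
    have E1 : (S1 + 2 * (t * D) + t ^+ 2 * S2) / (2 * gam) = S1 / (2*gam) + t * (D / gam) + t * (t * (S2 / (2 * gam))).
      by field; lra.
    rewrite E1 in Hm; nra.
  by rewrite pmulr_rge0.
have E : D = (sqn (z - x) - sqn (z - y) - sqn (y - x)) / 2.
  have -> : z - x = (z - y) + (y - x) by rewrite addrA subrK.
  by rewrite (sqnD (z - y) (y - x)) /D dotvC; field; lra.
rewrite E in key.
have : 0 <= (h z - h y) * (2 * gam) + (sqn (z - x) - sqn (z - y) - sqn (y - x)).
  have -> : (sqn (z - x) - sqn (z - y) - sqn (y - x)) = ((sqn (z - x) - sqn (z - y) - sqn (y - x)) / 2 / gam) * (2 * gam).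
    by field; lra.
  rewrite -mulrDl; apply: mulr_ge0 => //; lra.
lra.
Qed.
End Three.

Lemma lim_right_ge2 (R : realType) (q : R -> R) (L c B : R) :
  q x @[x --> (0:R)^'] --> L -> (forall t, 0 < t <= 1 -> c <= q t + t * B) -> c <= L.
Proof.
move=> cq H; apply: (@lim_right_ge _ (fun t => q t + t * B)) => //.
rewrite -[X in _ --> X]addr0; apply: cvgD => //.
have h0 : (fun t : R => t) @ (0:R) --> (0:R) by exact: cvg_id.
have h1 : (fun t : R => t) @ (0:R)^' --> (0:R) by exact: cvg_within_filter.
have := cvgM h1 (cvg_cst B); rewrite mul0r; exact.
Qed.

Lemma cont_sum (R : realType) (T : topologicalType) (I : Type) (s : seq I)
  (phi : I -> T -> R^o) : (forall i, continuous (phi i)) ->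
  continuous (fun y => \sum_(i <- s) phi i y).
Proof.
move=> H; elim: s => [|a s IH].
  have -> : (fun y => \sum_(i <- [::]) phi i y) = (fun _ => 0 : R^o).
    by rewrite funeqE => y; rewrite big_nil.
  move=> y; exact: cvg_cst.
have -> : (fun y => \sum_(i <- a :: s) phi i y) = phi a + (fun y => \sum_(i <- s) phi i y).
  by rewrite funeqE => y; rewrite big_cons.
move=> y; apply: continuousD; [exact: H | exact: IH].
Qed.

Lemma sq_out (R : realType) (a b c : R) : 0 < c -> (a < b - c) || (b + c < a) -> c * c <= (a - b) * (a - b).
Proof. by move=> c0 /orP[H|H]; nra. Qed.

Section Exist.
Variables (R : realType) (d : nat).
Implicit Types (x y z p v : 'rV[R]_d).

Lemma sqn_cont x : continuous (fun y : 'rV[R]_d => (sqn (y - x) : R^o)).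
Proof.
have -> : (fun y : 'rV[R]_d => (sqn (y - x) : R^o)) =
  (fun y => \sum_(i <- index_enum 'I_d) (fun i y => ((y ord0 i - x ord0 i) * (y ord0 i - x ord0 i) : R^o)) i y).
  by rewrite funeqE => y; rewrite /sqn /dotv; apply: eq_bigr => i _; rewrite !mxE.
apply: cont_sum => i y.
apply: (@continuousM R 'rV[R]_d); apply: (@continuousB R R^o 'rV[R]_d).
- by apply: coord_continuous.
- exact: cst_continuous.
- by apply: coord_continuous.
- exact: cst_continuous.
Qed.

Lemma sqn_ge_coord y i : (y ord0 i) ^+ 2 <= sqn y.
Proof.
rewrite /sqn /dotv (bigD1 i) //= expr2 lerDl.
by apply: sumr_ge0 => j _; rewrite -expr2 sqr_ge0.
Qed.

Lemma prox_exists (F : 'rV[R]_d -> R^o) (gF : 'rV[R]_d -> 'rV[R]_d) xs (gam : R) x :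
  0 < gam -> (forall y, is_gradient F (gF y) y) -> (forall y, F xs <= F y) ->
  exists p, gF p = gam^-1 *: (x - p).
Proof.
move=> g0 hg hmin.
pose Phi y : R := F y + sqn (y - x) / (2 * gam).
pose rho := 2 * gam * (F x - F xs).
have rho0 : 0 <= rho by rewrite /rho; have := hmin x; nra.
pose c := 1 + rho.
pose K := [set y : 'rV[R]_d | forall i, `[x ord0 i - c, x ord0 i + c]%classic (y ord0 i)].
have Kc : compact K.
  by apply: (@rV_compact _ _ (fun i => `[x ord0 i - c, x ord0 i + c]%classic)) => i; exact: segment_compact.
have xK : K x.
  move=> i /=; rewrite in_itv /=; apply/andP; split; rewrite /c; lra.
have Phic : {within K, continuous Phi}.
  apply: continuous_subspaceT => y.
  apply: (@continuousD R R^o 'rV[R]_d F).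
    exact: differentiable_continuous (hg y).1.
  apply: (@continuousM R 'rV[R]_d (fun y => sqn (y - x)) (fun=> (2 * gam)^-1)).
    exact: sqn_cont.
  exact: cst_continuous.
have [p pK pmin] := compact_EVT_min (ex_intro _ x xK) Kc Phic.
have sqn00 : sqn (x - x) = 0 by rewrite subrr /sqn dotv0l.
have glob : forall w, Phi p <= Phi w.
  move=> w; case: (pselect (K w)) => Kw.
    by apply: pmin; rewrite inE.
  have Hpx : Phi p <= Phi x by apply: pmin; rewrite inE.
  apply: le_trans Hpx _.
  have [i Hi] : exists i, ~ `[x ord0 i - c, x ord0 i + c]%classic (w ord0 i).
    by apply/existsNP.
  move: Hi; rewrite /= in_itv /= => /negP; rewrite negb_and -!ltNge => Hi.
  have Hsq : c ^+ 2 <= sqn (w - x).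
    apply: le_trans (sqn_ge_coord (w - x) i); rewrite mxE.
    have c0 : 0 < c by rewrite /c; lra.
    rewrite !mxE !expr2; exact: sq_out.
  rewrite /Phi sqn00 mul0r addr0.
  have := hmin w.
  have : rho <= sqn (w - x) by rewrite /c in Hsq; nra.
  rewrite /rho => H1 H2.
  have : F x - F xs <= sqn (w - x) / (2 * gam).
    by rewrite ler_pdivlMr; [nra | lra].
  lra.
exists p.
have key : forall v, 0 <= dotv (gF p - gam^-1 *: (x - p)) v.
  move=> v.
  have L := @grad_quot R d F (gF p) p v (hg p).
  have : - dotv (p - x) v / gam <= dotv (gF p) v.
    apply: (lim_right_ge2 (B := sqn v / (2 * gam)) L) => t /andP[t0 t1].
    have := glob (p + t *: v).
    rewrite /Phi.
    have -> : p + t *: v - x = (p - x) + t *: v by rewrite addrAC.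
    rewrite (sqnD (p - x)) dotvZr sqnZ.
    move=> H.
    have E : (sqn (p - x) + 2 * (t * dotv (p - x) v) + t ^+ 2 * sqn v) / (2 * gam) =
      sqn (p - x) / (2 * gam) + t * (dotv (p - x) v / gam) + t * (t * (sqn v / (2 * gam))).
      by field; lra.
    rewrite E in H.
    have Ea : (F (p + t *: v) - F p) / t + t * (sqn v / (2 * gam)) =
      ((F (p + t *: v) - F p) + t * (t * (sqn v / (2 * gam)))) / t.
      by field; lra.
    rewrite Ea ler_pdivlMr //.
    have E3 : - dotv (p - x) v / gam * t = - (t * (dotv (p - x) v / gam)) by ring.
    rewrite E3. lra.
  move=> H; rewrite (dotvBl (gF p)) dotvZl -(opprB p x) dotvNl.
  have : dotv (p - x) v / gam = gam^-1 * dotv (p - x) v by rewrite mulrC.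
  lra.
apply/eqP; rewrite -subr_eq0; apply/eqP; apply: sqn_eq0.
have := key (- (gF p - gam^-1 *: (x - p))).
rewrite dotvNr -/(sqn _) => H.
by apply/eqP; rewrite eq_le sqn_ge0 andbT -oppr_ge0.
Qed.
End Exist.

Lemma le_int_nm d (T : measurableType d) (R : realType) (mu : {measure set T -> \bar R})
  (f1 f2 : T -> \bar R) : (forall x, (0 <= f1 x)%E) -> (forall x, (f1 x <= f2 x)%E) ->
  (\int[mu]_(x in setT) f1 x <= \int[mu]_(x in setT) f2 x)%E.
Proof.
move=> f10 f12.
have f20 x : (0 <= f2 x)%E by apply: le_trans (f12 x).
rewrite !ge0_integralTE//.
apply: ereal_sup_le => _ [h /= hf <-]; exists h => //= x.
exact: le_trans (hf x) (f12 x).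
Qed.

Lemma iid_ge0 (dT : measure_display) (T : measurableType dT) (R : realType)
  (D : probability T R) n (Phi : seq T -> \bar R) :
  (forall s, (0 <= Phi s)%E) -> (0 <= iid_expect D n Phi)%E.
Proof.
elim: n Phi => [|n IH] Phi H /=; first exact: H.
by apply: integral_ge0 => xi _; apply: IH.
Qed.

Lemma sqn_sym (R : realType) d (a b : 'rV[R]_d) : sqn (a - b) = sqn (b - a).
Proof. by rewrite -opprB sqnN. Qed.

Lemma mes_sqn d0 (T : measurableType d0) (R : realType) d (h : T -> 'rV[R]_d) :
  (forall i, measurable_fun setT (fun xi => h xi ord0 i)) ->
  measurable_fun setT (fun xi => sqn (h xi)).
Proof.
move=> H; rewrite /sqn /dotv; apply: measurable_sum => i.
exact: measurable_realfun.measurable_funM.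
Qed.

Lemma mes_coordB d0 (T : measurableType d0) (R : realType) d (h : T -> 'rV[R]_d) (c : 'rV[R]_d) i :
  measurable_fun setT (fun xi => h xi ord0 i) ->
  measurable_fun setT (fun xi => (h xi - c) ord0 i).
Proof.
move=> H.
have -> : (fun xi => (h xi - c) ord0 i) = (fun xi => h xi ord0 i) \- cst (c ord0 i).
  by apply/funext => xi; rewrite !mxE.
by apply: measurable_realfun.measurable_funB => //; exact: measurable_cst.
Qed.

Section Main.
Variables (R : realType) (d : nat) (dT : measure_display)
  (T : measurableType dT) (D : probability T R)
  (f : T -> 'rV[R]_d -> R) (g : T -> 'rV[R]_d -> 'rV[R]_d)
  (F : 'rV[R]_d -> R) (gF : 'rV[R]_d -> 'rV[R]_d)
  (mu delta gamma : R) (xs : 'rV[R]_d)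
  (prox : T -> 'rV[R]_d -> 'rV[R]_d).
Hypothesis hfi : forall x, D.-integrable setT (fun xi => (f xi x)%:E).
Hypothesis hF : forall x, F x = Rintegral D setT (fun xi => f xi x).
Hypothesis hgi : forall x (i : 'I_d), D.-integrable setT (fun xi => (g xi x ord0 i)%:E).
Hypothesis hgF : forall x (i : 'I_d), gF x ord0 i = Rintegral D setT (fun xi => g xi x ord0 i).
Hypothesis hFg : forall x, is_gradient F (gF x) x.
Hypothesis hA1 : {ae D, forall xi, forall x, is_gradient (f xi) (g xi x) x}.
Hypothesis hA2 : {ae D, forall xi, convex_fun (f xi)}.
Hypothesis mu0 : 0 < mu.
Hypothesis hsc : forall x y, F y + dotv (gF y) (x - y) + mu / 2 * sqn (x - y) <= F x.
Hypothesis hmin : forall x, F xs <= F x.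
Hypothesis hA4 : {ae D, forall xi, g xi xs = 0}.
Hypothesis delta0 : 0 < delta.
Hypothesis hSS : forall x, (\int[D]_xi (sqn (g xi x - gF x - g xi xs))%:E
               <= (delta ^+ 2 * sqn (x - xs))%:E)%E.
Hypothesis gam0 : 0 < gamma.
Hypothesis gamle : gamma <= mu / (2 * delta ^+ 2).
Hypothesis hprox : {ae D, forall xi, forall x z,
     f xi (prox xi x) + sqn (prox xi x - x) / (2 * gamma)
       <= f xi z + sqn (z - x) / (2 * gamma)}.
Hypothesis hpm : forall x (i : 'I_d), measurable_fun setT (fun xi => prox xi x ord0 i).

Lemma mf x : measurable_fun setT (fun xi => f xi x).
Proof. by apply/measurable_realfun.measurable_EFinP; exact: measurable_int (hfi x). Qed.

Lemma mg x i : measurable_fun setT (fun xi => g xi x ord0 i).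
Proof. by apply/measurable_realfun.measurable_EFinP; exact: measurable_int (hgi x i). Qed.

Lemma gFxs0 : gF xs = 0.
Proof.
apply/rowP => i; rewrite hgF mxE /Rintegral.
rewrite (ae_eq_integral (cst 0%E)) //.
- by rewrite integral0.
- by apply/measurable_realfun.measurable_EFinP; exact: mg.
- apply: filterS hA4 => xi H _; by rewrite H mxE.
Qed.


Lemma pointwise x p : gF p = gamma^-1 *: (x - p) ->
  {ae D, forall xi, setT xi ->
    ((sqn (prox xi x - xs) + 2 * gamma * Num.max (f xi p - f xi xs) 0 + sqn (x - p))%:E <=
     (sqn (x - xs) + gamma ^+ 2 * sqn (g xi p - gF p - g xi xs))%:E)%E}.
Proof.
move=> hp.
apply: (filter_app _ _ hprox); apply: (filter_app _ _ hA4);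
apply: (filter_app _ _ hA2); apply: filterS hA1.
move=> xi h1 h2 h4 h5 _.
rewrite lee_fin.
set G := gF p.
have Exp : x - p = gamma *: G.
  by rewrite /G hp scalerA mulfV ?scale1r // gt_eqF.
set y := prox xi x.
have T3 := three_point (x:=x) (y:=y) xs gam0 h2 (h5 x).
have Cv := convex_grad y h2 (h1 p).
have Cv0 := convex_grad p h2 (h1 xs).
rewrite h4 dotv0l addr0 in Cv0.
rewrite max_l; last by rewrite subr_ge0.
rewrite h4 subr0.
set w := g xi p.
have E1 : y - p = (y - x) + gamma *: G by rewrite -Exp addrA subrK.
rewrite E1 dotvDr dotvZr in Cv.
rewrite (sqn_sym xs y) (sqn_sym xs x) in T3.
have E2 : sqn (w - G) = sqn w - 2 * dotv w G + sqn G by rewrite sqnB.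
have E3 : sqn (x - p) = gamma ^+ 2 * sqn G by rewrite Exp sqnZ.
have P0 := sqn_ge0 ((y - x) + gamma *: w).
rewrite sqnD dotvZr sqnZ (dotvC (y - x)) in P0.
rewrite E2 E3.
set a := sqn (y - x) in T3 P0 *; set b := dotv w (y - x) in Cv P0 *.
set e := dotv w G in Cv *.
have Hm : 2 * gamma * (f xi p + (b + gamma * e)) <= 2 * gamma * f xi y.
  by apply: ler_wpM2l; [rewrite mulr_ge0 // ltW | exact: Cv].
nra.
Qed.

Lemma int_lin (a b : T -> R) (k c : R) : measurable_fun setT a -> measurable_fun setT b ->
  (forall xi, 0 <= a xi) -> (forall xi, 0 <= b xi) -> 0 <= k -> 0 <= c ->
  (\int[D]_xi (a xi + k * b xi + c)%:E =
   \int[D]_xi (a xi)%:E + k%:E * \int[D]_xi (b xi)%:E + c%:E)%E.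
Proof.
move=> ma mb a0 b0 k0 c0.
under eq_integral => xi _ do rewrite EFinD EFinD EFinM.
have m_a : measurable_fun setT (fun xi : T => (a xi)%:E).
  exact/measurable_realfun.measurable_EFinP.
have m_kb : measurable_fun setT (fun xi : T => (k%:E * (b xi)%:E)%E).
  by apply: emeasurable_funM; [exact: measurable_cst | exact/measurable_realfun.measurable_EFinP].
have m_ab : measurable_fun setT (fun xi : T => ((a xi)%:E + k%:E * (b xi)%:E)%E).
  exact: emeasurable_funD.
have p_a : forall xi : T, setT xi -> (0 <= (a xi)%:E)%E by move=> xi _; rewrite lee_fin.
have p_kb : forall xi : T, setT xi -> (0 <= k%:E * (b xi)%:E)%E.
  by move=> xi _; rewrite mule_ge0 // lee_fin.
have p_ab : forall xi : T, setT xi -> (0 <= (a xi)%:E + k%:E * (b xi)%:E)%E.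
  by move=> xi _; rewrite adde_ge0 // ?p_a ?p_kb.
have p_c : forall xi : T, setT xi -> (0 <= (fun=> c%:E) xi)%E by move=> xi _; rewrite lee_fin.
rewrite (ge0_integralD _ measurableT p_ab m_ab p_c (measurable_cst _)).
rewrite (ge0_integralD _ measurableT p_a m_a p_kb m_kb).
rewrite (ge0_integralZl_EFin _ measurableT _ _ k0); last 2 first.
- by move=> xi _; rewrite lee_fin.
- exact/measurable_realfun.measurable_EFinP.
rewrite integral_cst //.
rewrite [X in (_ + _ + _ * X)%E](_ : _ = 1%E); last exact: probability_setT.
by rewrite mule1.
Qed.

Lemma int_lin2 (b : T -> R) (k c : R) : measurable_fun setT b ->
  (forall xi, 0 <= b xi) -> 0 <= k -> 0 <= c ->
  (\int[D]_xi (c + k * b xi)%:E = c%:E + k%:E * \int[D]_xi (b xi)%:E)%E.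
Proof.
move=> mb b0 k0 c0.
have := @int_lin (fun=> 0) b k c (measurable_cst _) mb (fun=> lexx 0) b0 k0 c0.
under eq_integral => xi _ do rewrite add0r addrC.
move=> ->; rewrite integral0 add0e addeC //.
Qed.

Lemma Fint x : (\int[D]_xi (f xi x)%:E)%E = (F x)%:E.
Proof. by rewrite hF /Rintegral fineK // (integrable_fin_num _ (hfi x)). Qed.

Lemma one_step x : (\int[D]_xi (sqn (prox xi x - xs))%:E <=
  ((1 - Num.min (gamma * mu / 4) (1 / 2)) * sqn (x - xs))%:E)%E.
Proof.
have [p hp] := prox_exists (F := F) x gam0 hFg hmin.
pose phi xi := sqn (prox xi x - xs).
pose psi xi := Num.max (f xi p - f xi xs) 0.
pose S xi := sqn (g xi p - gF p - g xi xs).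
have mphi : measurable_fun setT phi.
  by apply: mes_sqn => i; apply: mes_coordB; exact: hpm.
have mpsi : measurable_fun setT psi.
  apply: measurable_realfun.measurable_maxr; last exact: measurable_cst.
  exact: measurable_realfun.measurable_funB (mf p) (mf xs).
have mS : measurable_fun setT S.
  apply: mes_sqn => i.
  have -> : (fun xi => (g xi p - gF p - g xi xs) ord0 i) =
    (fun xi => g xi p ord0 i) \- cst (gF p ord0 i) \- (fun xi => g xi xs ord0 i).
    by apply/funext => xi; rewrite !mxE.
  apply: measurable_realfun.measurable_funB; last exact: mg.
  by apply: measurable_realfun.measurable_funB; [exact: mg | exact: measurable_cst].
have phi0 xi : 0 <= phi xi by exact: sqn_ge0.
have psi0 xi : 0 <= psi xi by rewrite /psi le_max lexx orbT.
have S0 xi : 0 <= S xi by exact: sqn_ge0.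
have sxp0 := sqn_ge0 (x - p).
have r20 := sqn_ge0 (x - xs).
have g2 : 0 <= 2 * gamma by rewrite mulr_ge0 // ltW.
have gg : 0 <= gamma ^+ 2 by rewrite sqr_ge0.
have Hle : (\int[D]_xi (phi xi + 2 * gamma * psi xi + sqn (x - p))%:E <=
    \int[D]_xi (sqn (x - xs) + gamma ^+ 2 * S xi)%:E)%E.
  apply: ae_ge0_le_integral => //.
  - by move=> xi _; rewrite lee_fin addr_ge0 // addr_ge0 // mulr_ge0.
  - apply/measurable_EFinP; apply: measurable_funD; last exact: measurable_cst.
    by apply: measurable_funD => //; apply: measurable_funM => //; exact: measurable_cst.
  - by move=> xi _; rewrite lee_fin addr_ge0 // mulr_ge0.
  - apply/measurable_EFinP; apply: measurable_funD; first exact: measurable_cst.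
    by apply: measurable_funM => //; exact: measurable_cst.
  - exact: (pointwise hp).
rewrite (int_lin mphi mpsi phi0 psi0 g2 sxp0) (int_lin2 mS S0 gg r20) in Hle.
have Hpsi : (\int[D]_xi (psi xi)%:E = (F p - F xs)%:E)%E.
  rewrite (ae_eq_integral (fun xi => (f xi p)%:E - (f xi xs)%:E)%E) //.
  - rewrite integralB_EFin //; last 2 first.
      exact: hfi.
      exact: hfi.
    by rewrite !Fint EFinB.
  - exact/measurable_EFinP.
  - apply: emeasurable_funB; exact/measurable_EFinP/mf.
  - apply: (filter_app _ _ hA4); apply: (filter_app _ _ hA2); apply: filterS hA1.
    move=> xi h1 h2 h4 _.
    have := convex_grad p h2 (h1 xs).
    rewrite h4 dotv0l addr0 => H.
    by rewrite /psi max_l ?subr_ge0 // EFinB.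
have Hs := hSS p.
rewrite Hpsi in Hle.
have HI0 : (0 <= \int[D]_xi (phi xi)%:E)%E by apply: integral_ge0 => xi _; rewrite lee_fin.
have HJ0 : (0 <= \int[D]_xi (S xi)%:E)%E by apply: integral_ge0 => xi _; rewrite lee_fin.
have -> : (\int[D]_xi (sqn (prox xi x - xs))%:E = \int[D]_xi (phi xi)%:E)%E by [].
move: HI0 HJ0 Hle Hs.
move: (\int[D]_xi (phi xi)%:E)%E (\int[D]_xi (S xi)%:E)%E => I J.
case: I => [i| |] //; case: J => [j| |] //.
rewrite -!EFinM -!EFinD !lee_fin => i0 j0 H1 H2.
have hFp : mu / 2 * sqn (p - xs) <= F p - F xs.
  have := hsc p xs; rewrite gFxs0 dotv0l addr0; lra.
have d2 : 0 < 2 * delta ^+ 2 by rewrite mulr_gt0 // exprn_gt0.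
have gd : gamma * delta ^+ 2 <= mu / 2.
  move: gamle; rewrite ler_pdivlMr // => H.
  rewrite ler_pdivlMr //; lra.
have sp0 := sqn_ge0 (p - xs).
have tri : sqn (x - xs) <= 2 * sqn (x - p) + 2 * sqn (p - xs).
  have -> : x - xs = (x - p) + (p - xs) by rewrite addrA subrK.
  rewrite sqnD.
  have := sqn_ge0 ((x - p) - (p - xs)); rewrite sqnB; lra.
have h1 : gamma ^+ 2 * j <= gamma * (mu / 2) * sqn (p - xs).
  have : gamma ^+ 2 * j <= gamma ^+ 2 * (delta ^+ 2 * sqn (p - xs)) by rewrite ler_pM2l ?exprn_gt0.
  have : gamma * (gamma * delta ^+ 2) * sqn (p - xs) <= gamma * (mu / 2) * sqn (p - xs).
    by apply: ler_wpM2r => //; apply: ler_wpM2l => //; exact: ltW.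
  have -> : gamma ^+ 2 * (delta ^+ 2 * sqn (p - xs)) = gamma * (gamma * delta ^+ 2) * sqn (p - xs) by ring.
  lra.
set m := Num.min (gamma * mu / 4) (1 / 2).
have m1 : m <= gamma * mu / 4 by rewrite /m ge_min lexx.
have m2 : m <= 1 / 2 by rewrite /m ge_min lexx orbT.
have m0 : 0 < m by rewrite /m lt_min; apply/andP; split; [rewrite divr_gt0 // mulr_gt0 | lra].
have h2 : gamma * mu * sqn (p - xs) <= 2 * gamma * (F p - F xs).
  have : gamma * (mu / 2 * sqn (p - xs)) <= gamma * (F p - F xs) by rewrite ler_pM2l.
  have -> : gamma * (mu / 2 * sqn (p - xs)) = gamma * mu * sqn (p - xs) / 2 by field.
  lra.
have h3 : m * sqn (x - xs) <= sqn (x - p) + gamma * (mu / 2) * sqn (p - xs).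
  have : m * sqn (x - xs) <= m * (2 * sqn (x - p) + 2 * sqn (p - xs)) by rewrite ler_pM2l.
  have : m * (2 * sqn (x - p)) <= sqn (x - p).
    have : m * (2 * sqn (x - p)) <= 1 / 2 * (2 * sqn (x - p)) by apply: ler_wpM2r; [lra|].
    lra.
  have : m * (2 * sqn (p - xs)) <= gamma * (mu / 2) * sqn (p - xs).
    have : m * (2 * sqn (p - xs)) <= gamma * mu / 4 * (2 * sqn (p - xs)) by apply: ler_wpM2r; [lra|].
    have -> : gamma * mu / 4 * (2 * sqn (p - xs)) = gamma * (mu / 2) * sqn (p - xs) by field.
    done.
  lra.
have -> : (1 - m) * sqn (x - xs) = sqn (x - xs) - m * sqn (x - xs) by ring.
lra.
Qed.
Lemma main_ind k x0 : (iid_expect D k (fun s => (sqn (sppm prox x0 s - xs))%:E) <=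
  (((1 - Num.min (gamma * mu / 4) (1 / 2)) ^+ k) * sqn (x0 - xs))%:E)%E.
Proof.
set c := 1 - Num.min (gamma * mu / 4) (1 / 2).
have c0 : 0 <= c.
  rewrite /c subr_ge0; apply: le_trans (_ : 1 / 2 <= 1); first by rewrite ge_min lexx orbT.
  lra.
elim: k x0 => [|k IH] x0 /=.
  by rewrite /sppm /= expr0 mul1r.
apply: le_trans (@le_int_nm _ _ _ D _ (fun xi => ((c ^+ k * sqn (prox xi x0 - xs))%:E)) _ _) _.
- move=> xi; apply: iid_ge0 => s; by rewrite lee_fin sqn_ge0.
- move=> xi; exact: IH (prox xi x0).
under eq_integral => xi _ do rewrite EFinM.
rewrite ge0_integralZl_EFin //; last 3 first.
- by move=> xi _; rewrite lee_fin sqn_ge0.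
- apply/measurable_EFinP; apply: mes_sqn => i; apply: mes_coordB; exact: hpm.
- exact: exprn_ge0.
apply: le_trans (lee_wpmul2l _ (one_step x0)) _; first by rewrite lee_fin exprn_ge0.
by rewrite -EFinM exprS mulrA [c ^+ k * c]mulrC.
Qed.

End Main.

Theorem theorem6p1 (R : realType) (d : nat) (dT : measure_display)
  (T : measurableType dT) (D : probability T R)
  (f : T -> 'rV[R]_d -> R) (g : T -> 'rV[R]_d -> 'rV[R]_d)
  (F : 'rV[R]_d -> R) (gF : 'rV[R]_d -> 'rV[R]_d)
  (mu delta gamma : R) (xs x0 : 'rV[R]_d)
  (prox : T -> 'rV[R]_d -> 'rV[R]_d) :
  (* setting: f(x) = E[f_xi(x)], grad f(x) = E[grad f_xi(x)] *)
  (forall x, D.-integrable setT (fun xi => (f xi x)%:E)) ->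
  (forall x, F x = Rintegral D setT (fun xi => f xi x)) ->
  (forall x (i : 'I_d), D.-integrable setT (fun xi => (g xi x ord0 i)%:E)) ->
  (forall x (i : 'I_d), gF x ord0 i = Rintegral D setT (fun xi => g xi x ord0 i)) ->
  (forall x, is_gradient F (gF x) x) ->
  (* (A1) differentiability, g xi = grad f_xi, for D-a.e. xi *)
  {ae D, forall xi, forall x, is_gradient (f xi) (g xi x) x} ->
  (* (A2) convexity for D-a.e. xi *)
  {ae D, forall xi, convex_fun (f xi)} ->
  (* (A3) mu-strong convexity of f *)
  0 < mu ->
  (forall x y, F y + dotv (gF y) (x - y) + mu / 2 * sqn (x - y) <= F x) ->
  (* x_* is a minimizer of f *)
  (forall x, F xs <= F x) ->
  (* (A4) interpolation at x_* *)
  {ae D, forall xi, g xi xs = 0} ->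
  (* (SS) star similarity at x_* with constant delta > 0 *)
  0 < delta ->
  (forall x, (\int[D]_xi (sqn (g xi x - gF x - g xi xs))%:E
               <= (delta ^+ 2 * sqn (x - xs))%:E)%E) ->
  (* stepsize *)
  0 < gamma -> gamma <= mu / (2 * delta ^+ 2) ->
  (* SPPM step: prox xi x = argmin_z { f_xi(z) + ||z - x||^2/(2 gamma) } *)
  {ae D, forall xi, forall x z,
     f xi (prox xi x) + sqn (prox xi x - x) / (2 * gamma)
       <= f xi z + sqn (z - x) / (2 * gamma)} ->
  (* each iterate is a random variable *)
  (forall x (i : 'I_d), measurable_fun setT (fun xi => prox xi x ord0 i)) ->
  forall k : nat,
    (iid_expect D k (fun s => (sqn (sppm prox x0 s - xs))%:E)
      <= (((1 - Num.min (gamma * mu / 4) (1 / 2)) ^+ k) * sqn (x0 - xs))%:E)%E.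
Proof.
move=> hfi hF hgi hgF hFg hA1 hA2 mu0 hsc hmin hA4 delta0 hSS gam0 gamle hprox hpm k.
exact: (main_ind hfi hF hgi hgF hFg hA1 hA2 mu0 hsc hmin hA4 delta0 hSS gam0 gamle hprox hpm k x0).
Qed.
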